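(* Let $m\ge1$, $F(x)=|x^h|^2$ and $G(x)=-x^3$ on $\Omega=\mathbb R^2\times\,]0,1[$. Let $(\widetilde\varrho_\varepsilon)_{0<\varepsilon\le1}$ be a family of positive functions on $\Omega$ solving $\Pi(\widetilde\varrho_\varepsilon(x))=\varepsilon^{2(m-1)}F(x)+\varepsilon^mG(x)$ for all $x\in\Omega$. Then there exist $\varepsilon_0>0$ and $0<\rho_*<1$ such that $\widetilde\varrho_\varepsilon(x)\ge\rho_*$ for all $\varepsilon\in\,]0,\varepsilon_0]$ and all $x\in\Omega$.
   Context: Points of $\Omega$ are $x=(x^h,x^3)$ with $x^h\in\mathbb R^2$. The pressure is $p(\varrho,\vartheta)=\vartheta^{5/2}P(\varrho/\vartheta^{3/2})+\frac a3\vartheta^4$ with $a>0$, where $P\in C^1([0,\infty))\cap C^2(]0,\infty[)$, $P(0)=0$, $P'(Z)>0$ for all $Z\ge0$, $0<\big(\frac53P(Z)-P'(Z)Z\big)/Z<c$ for all $Z>0$, and $\lim_{Z\to+\infty}P(Z)/Z^{5/3}=P_\infty>0$. Fix a constant $\overline\vartheta>0$ and set $\Pi(\varrho):=\int_1^\varrho\frac{\partial_\varrho p(z,\overline\vartheta)}{z}dz$ for $\varrho>0$. *)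

(* Defs.v *)
From Stdlib Require Import Reals.
From Coquelicot Require Import Coquelicot.
Open Scope R_scope.

Definition pressure (P : R -> R) (a rho theta : R) : R :=
  Rpower theta (5/2) * P (rho / Rpower theta (3/2)) + a / 3 * theta ^ 4.

Definition Pi_fun (P : R -> R) (a thetabar rho : R) : R :=
  RInt (fun z => Derive (fun r => pressure P a r thetabar) z / z) 1 rho.

Definition pressure_hyp (P dP : R -> R) (c Pinf : R) : Prop :=
  (* C^1 on [0,oo): derivative dP on ]0,oo[, right derivative at 0,
     dP continuous on ]0,oo[ and right-continuous at 0 *)
  (forall Z, 0 < Z -> is_derive P Z (dP Z)) /\
  filterlim (fun h => (P h - P 0) / h) (at_right 0) (locally (dP 0)) /\
  (forall Z, 0 < Z -> continuous dP Z) /\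
  filterlim dP (at_right 0) (locally (dP 0)) /\
  (exists d2P : R -> R,
      forall Z, 0 < Z -> is_derive dP Z (d2P Z) /\ continuous d2P Z) /\
  P 0 = 0 /\
  (forall Z, 0 <= Z -> 0 < dP Z) /\
  (forall Z, 0 < Z -> 0 < (5/3 * P Z - dP Z * Z) / Z /\
                      (5/3 * P Z - dP Z * Z) / Z < c) /\
  is_lim (fun Z => P Z / Rpower Z (5/3)) p_infty Pinf /\
  0 < Pinf.

(* Main.v *)
Require Import Defs.
From Stdlib Require Import Reals Lra.
From Coquelicot Require Import Coquelicot.
Open Scope R_scope.

Lemma Rpower_le_self (e m : R) : 0 < e <= 1 -> 1 <= m -> Rpower e m <= e.
Proof.
  intros [He1 He2] Hm. unfold Rpower.
  assert (Hl : ln e <= 0).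
  { destruct (Rle_lt_or_eq_dec e 1 He2) as [H|H].
    - rewrite <- ln_1. left. apply ln_increasing; lra.
    - subst. rewrite ln_1. lra. }
  assert (Hle : m * ln e <= ln e) by nra.
  rewrite <- (exp_ln e) at 2 by lra.
  destruct (Rle_lt_or_eq_dec _ _ Hle) as [H|H].
  - left. apply exp_increasing; exact H.
  - rewrite H. lra.
Qed.

Lemma Rpower_pos' (x y : R) : 0 < Rpower x y.
Proof. unfold Rpower. apply exp_pos. Qed.

Theorem lemma2p2
  (P dP : R -> R) (c Pinf a thetabar m : R)
  (hP : pressure_hyp P dP c Pinf) (ha : 0 < a) (hth : 0 < thetabar)
  (hm : 1 <= m)
  (rho : R -> R -> R -> R -> R)
  (hpos : forall eps x1 x2 x3, 0 < eps <= 1 -> 0 < x3 < 1 ->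
            0 < rho eps x1 x2 x3)
  (heq : forall eps x1 x2 x3, 0 < eps <= 1 -> 0 < x3 < 1 ->
            Pi_fun P a thetabar (rho eps x1 x2 x3)
            = Rpower eps (2 * (m - 1)) * (x1 ^ 2 + x2 ^ 2)
              + Rpower eps m * (- x3)) :
  exists eps0 rhos, 0 < eps0 /\ 0 < rhos < 1 /\
    forall eps x1 x2 x3, 0 < eps <= eps0 -> 0 < x3 < 1 ->
      rhos <= rho eps x1 x2 x3.
Proof.
  destruct hP as (hder & _ & hcont & _ & _ & _ & hdpos & _).
  set (k := Rpower thetabar (3/2)).
  set (A := Rpower thetabar (5/2)).
  assert (Hk : 0 < k) by apply Rpower_pos'.
  assert (HA : 0 < A) by apply Rpower_pos'.
  set (h := fun z => A * (/k * dP (z / k)) / z).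
  assert (Hd : forall z, 0 < z ->
     Derive (fun r => pressure P a r thetabar) z = A * (/k * dP (z / k))).
  { intros z Hz. apply is_derive_unique.
    assert (H1 : is_derive (fun r => r / k) z (/k)).
    { auto_derive; [auto | field; lra]. }
    assert (H2 : is_derive P (z / k) (dP (z / k))).
    { apply hder. apply Rdiv_lt_0_compat; lra. }
    pose proof (is_derive_comp P (fun r => r / k) z _ _ H2 H1) as H3.
    pose proof (is_derive_scal (fun x => P (x / k)) z A _ H3) as H4.
    pose proof (is_derive_plus (fun x => A * P (x / k)) (fun _ => a/3*thetabar^4) z _ _ H4 (is_derive_const (a/3*thetabar^4) z)) as H5.
    replace (A * (/k * dP (z / k))) with (plus (A * scal (/k) (dP (z / k))) zero)
      by (rewrite plus_zero_r; reflexivity).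
    exact H5. }
  assert (Hc : forall z, 0 < z -> continuous h z).
  { intros z Hz. unfold h, Rdiv.
    apply (continuous_mult (fun y => A * (/k * dP (y * /k))) (fun y => / y)).
    - apply (continuous_mult (fun _ => A) (fun y => /k * dP (y * /k))).
      + apply continuous_const.
      + apply (continuous_mult (fun _ => /k) (fun y => dP (y * /k))).
        * apply continuous_const.
        * apply (continuous_comp (fun y => y * /k) dP).
          -- apply (continuous_mult (fun y => y) (fun _ => /k)).
             ++ apply continuous_id.
             ++ apply continuous_const.
          -- apply hcont. apply Rmult_lt_0_compat; [lra | apply Rinv_0_lt_compat; lra].
    - apply continuous_Rinv; lra. }
  assert (Hhpos : forall z, 0 < z -> 0 < h z).
  { intros z Hz. unfold h. apply Rdiv_lt_0_compat; [|lra].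
    apply Rmult_lt_0_compat; [lra|]. apply Rmult_lt_0_compat.
    - apply Rinv_0_lt_compat; lra.
    - apply hdpos. left. apply Rdiv_lt_0_compat; lra. }
  assert (HPi : forall r, 0 < r -> Pi_fun P a thetabar r = RInt h 1 r).
  { intros r Hr. unfold Pi_fun. apply RInt_ext. intros x [Hx1 Hx2].
    assert (0 < x).
    { apply Rlt_le_trans with (Rmin 1 r); [|lra].
      apply Rmin_glb_lt; lra. }
    rewrite Hd by lra. unfold h. reflexivity. }
  assert (Hex : forall u v, 0 < u -> 0 < v -> ex_RInt h u v).
  { intros u v Hu Hv. apply (@ex_RInt_continuous R_CompleteNormedModule). intros z [Hz1 Hz2].
    apply Hc. apply Rlt_le_trans with (Rmin u v); [|lra].
    apply Rmin_glb_lt; lra. }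
  set (q := RInt h (1/2) 1).
  assert (Hq : 0 < q).
  { unfold q. apply RInt_gt_0; [lra | |].
    - intros x Hx. apply Hhpos. lra.
    - intros x Hx. apply Hc. lra. }
  assert (Hsmall : forall r, 0 < r < 1/2 -> Pi_fun P a thetabar r <= - q).
  { intros r Hr. rewrite HPi by lra.
    rewrite <- opp_RInt_swap by (apply Hex; lra).
    rewrite <- (RInt_Chasles h r (1/2) 1) by (apply Hex; lra).
    assert (0 <= RInt h r (1/2)).
    { apply RInt_ge_0; [lra | apply Hex; lra |].
      intros x Hx. left. apply Hhpos. lra. }
    unfold q in *. change (opp (plus (RInt h r (1/2)) (RInt h (1/2) 1))) with (- (RInt h r (1/2) + RInt h (1/2) 1)).
    lra. }
  exists (Rmin 1 q), (1/2). split; [apply Rmin_glb_lt; lra|]. split; [lra|].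
  intros eps x1 x2 x3 He Hx3.
  assert (He1 : 0 < eps <= 1) by (split; [lra| apply Rle_trans with (Rmin 1 q); [lra| apply Rmin_l]]).
  assert (Heq : eps <= q) by (apply Rle_trans with (Rmin 1 q); [lra| apply Rmin_r]).
  destruct (Rlt_le_dec (rho eps x1 x2 x3) (1/2)) as [Hlt|Hge]; [|exact Hge].
  exfalso.
  pose proof (hpos eps x1 x2 x3 He1 Hx3) as Hp.
  pose proof (Hsmall _ (conj Hp Hlt)) as Hs.
  rewrite heq in Hs by assumption.
  pose proof (Rpower_le_self eps m He1 hm) as Hr.
  pose proof (Rpower_pos' eps (2 * (m - 1))) as Hr2.
  pose proof (Rpower_pos' eps m) as Hr3.
  assert (0 <= x1 ^ 2 + x2 ^ 2) by nra.
  assert (0 <= Rpower eps (2 * (m - 1)) * (x1 ^ 2 + x2 ^ 2)) by nra.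
  assert (Rpower eps m * (- x3) > - Rpower eps m) by nra.
  lra.
Qed.
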